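(* $D_{\mathbb{C},2}\ge 1.1066$. More precisely, for $f_2(a,b,c)=\dfrac{(|a|^{4/3}+|b|^{4/3}+|c|^{4/3})^{3/4}}{(|a|+|b|)\sqrt{1+\frac{c^2}{4|ab|}}}$ one has $D_{\mathbb{C},2}\ge f_2\!\left(1,-1,\tfrac{352203}{125000}\right)\approx1.1066$.
   Context: $\ell_\infty^N(\mathbb{C})$ is $\mathbb{C}^N$ with the sup norm, and for a polynomial $P$ on it, $\|P\|=\sup\{|P(z)|:|z_i|\le1\ \forall i\}$. $D_{\mathbb{C},m}$ is the smallest constant $D$ such that for every $N$ and every $m$-homogeneous polynomial $P(z)=\sum_{|\alpha|=m}a_\alpha z^\alpha$ on $\ell_\infty^N(\mathbb{C})$, $\big(\sum_{|\alpha|=m}|a_\alpha|^{\frac{2m}{m+1}}\big)^{\frac{m+1}{2m}}\le D\|P\|$. *)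

(* Defs.v *)
From Stdlib Require Import Reals.
Open Scope R_scope.

Definition C : Type := (R * R)%type.
Definition C0 : C := (0, 0).
Definition Cadd (z w : C) : C := (fst z + fst w, snd z + snd w).
Definition Cmul (z w : C) : C :=
  (fst z * fst w - snd z * snd w, fst z * snd w + snd z * fst w).
Definition Cmod (z : C) : R := sqrt (fst z * fst z + snd z * snd z).

Fixpoint sumR (n : nat) (f : nat -> R) : R :=
  match n with O => 0 | S k => sumR k f + f k end.
Fixpoint sumC (n : nat) (f : nat -> C) : C :=
  match n with O => C0 | S k => Cadd (sumC k f) (f k) end.

(* real power of a nonnegative real, with the convention 0^p = 0 (p > 0) *)
Definition powr (x p : R) : R := if Rle_dec x 0 then 0 else Rpower x p.

(* A 2-homogeneous polynomial on C^N: P(z) = sum_{i <= j < N} a i j z_i z_j;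
   the multi-indices alpha with |alpha| = 2 are exactly the pairs i <= j. *)
Definition poly2_eval (N : nat) (a : nat -> nat -> C) (z : nat -> C) : C :=
  sumC N (fun j => sumC (S j) (fun i => Cmul (a i j) (Cmul (z i) (z j)))).

Definition in_polydisc (N : nat) (z : nat -> C) : Prop :=
  forall i, (i < N)%nat -> Cmod (z i) <= 1.

Definition is_sup_norm2 (N : nat) (a : nat -> nat -> C) (s : R) : Prop :=
  is_lub (fun r => exists z, in_polydisc N z /\ r = Cmod (poly2_eval N a z)) s.

(* (sum_{|alpha|=2} |a_alpha|^{4/3})^{3/4}   (2m/(m+1) = 4/3 for m = 2) *)
Definition coef_norm2 (N : nat) (a : nat -> nat -> C) : R :=
  powr (sumR N (fun j => sumR (S j) (fun i => powr (Cmod (a i j)) (4/3)))) (3/4).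

Definition admissible_D2 (D : R) : Prop :=
  forall (N : nat) (a : nat -> nat -> C) (s : R),
    is_sup_norm2 N a s -> coef_norm2 N a <= D * s.

Definition f2 (a b c : R) : R :=
  powr (powr (Rabs a) (4/3) + powr (Rabs b) (4/3) + powr (Rabs c) (4/3)) (3/4)
  / ((Rabs a + Rabs b) * sqrt (1 + c ^ 2 / (4 * Rabs (a * b)))).

(* Main.v *)
Require Import Defs.
From Stdlib Require Import Reals Lra Psatz.
Open Scope R_scope.

Lemma key (c x1 y1 x2 y2 : R) :
  x1*x1+y1*y1 <= 1 -> x2*x2+y2*y2 <= 1 ->
  let re := x1*x1 - y1*y1 - (x2*x2 - y2*y2) + c*(x1*x2 - y1*y2) in
  let im := 2*x1*y1 - 2*x2*y2 + c*(x1*y2+y1*x2) in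
  re*re + im*im <= c*c+4.
Proof.
  intros H1 H2 re im.
  set (p := x1*x1+y1*y1). set (q := x2*x2+y2*y2). set (a := x1*x2+y1*y2).
  assert (E : re*re+im*im = (p+q)^2 + c*c*p*q - 4*a*a + 2*c*(p-q)*a).
  { unfold re, im, p, q, a. ring. }
  rewrite E. assert (0 <= p) by (unfold p; nra). assert (0 <= q) by (unfold q; nra). assert (p <= 1) by (unfold p; lra). assert (q <= 1) by (unfold q; lra). clearbody p q a re im.

  assert (E2 : c*c+4 - ((p+q)^2 + c*c*p*q - 4*a*a + 2*c*(p-q)*a)
     = (4 - (p+q)^2)*(1+c*c/4) + (2*a - c*(p-q)/2)^2) by field.
  assert (0 <= (4 - (p+q)^2)*(1+c*c/4)).
  { apply Rmult_le_pos. simpl; nra. assert (0 <= c*c) by nra. lra. }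
  assert (0 <= (2*a - c*(p-q)/2)^2) by (apply pow2_ge_0). lra.
Qed.

Definition cc := 352203 / 125000.
Definition aa (i j : nat) : Defs.C :=
  match i, j with 0,0 => (1,0) | 1,1 => (-1,0) | 0,1 => (cc,0) | _,_ => (0,0) end.

Lemma powr_pos x p : 0 < x -> powr x p = Rpower x p.
Proof. intros H; unfold powr; destruct (Rle_dec x 0); lra. Qed.

Lemma Rpower_one p : Rpower 1 p = 1.
Proof. unfold Rpower; rewrite ln_1, Rmult_0_r; apply exp_0. Qed.

Lemma Cmod_real x : 0 <= x -> Cmod (x, 0) = x.
Proof. intros H; unfold Cmod; simpl. rewrite Rmult_0_l, Rplus_0_r. apply sqrt_square; lra. Qed.

Lemma Cmod_real' x : 0 <= x -> Cmod (-x, 0) = x.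
Proof. intros H; unfold Cmod; simpl. rewrite Rmult_0_l, Rplus_0_r.
  replace (-x * -x) with (x*x) by ring. apply sqrt_square; lra. Qed.

Lemma sqrt_le1 x : 0 <= x -> sqrt x <= 1 -> x <= 1.
Proof. intros H H1. rewrite <- (sqrt_sqrt x H).
  assert (0 <= sqrt x) by apply sqrt_pos. nra. Qed.

Theorem mainTheorem12 :
  forall D : R, admissible_D2 D ->
    f2 1 (-1) (352203 / 125000) <= D /\ 11066 / 10000 <= D.
Proof.
  intros D HD.
  set (S := 2 * sqrt (1 + cc ^ 2 / 4)).
  assert (Hccpos : 0 < cc) by (unfold cc; lra).
  assert (HS2 : S ^ 2 = cc*cc+4).
  { unfold S. rewrite Rpow_mult_distr, pow2_sqrt. field.
    assert (0 <= cc^2) by apply pow2_ge_0. lra. }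
  assert (HSpos : 0 < S).
  { unfold S. apply Rmult_lt_0_compat; [lra|]. apply sqrt_lt_R0.
    assert (0 <= cc^2) by apply pow2_ge_0. lra. }
  assert (Hub : forall z, in_polydisc 2 z -> Cmod (poly2_eval 2 aa z) <= S).
  { intros z Hz. unfold poly2_eval. simpl. unfold Cadd, Cmul, C0, Cmod. simpl.
    rewrite <- (sqrt_pow2 S) by lra. apply sqrt_le_1_alt. rewrite HS2.
    assert (H0 := Hz 0%nat ltac:(lia)). assert (H1 := Hz 1%nat ltac:(lia)).
    unfold Cmod in H0, H1.
    apply sqrt_le1 in H0; [| nra]. apply sqrt_le1 in H1; [| nra].
    pose proof (key cc (fst (z 0%nat)) (snd (z 0%nat)) (fst (z 1%nat)) (snd (z 1%nat)) H0 H1) as K.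
    simpl in K. eapply Rle_trans; [| exact K]. right. ring. }
  set (E := fun r => exists z, in_polydisc 2 z /\ r = Cmod (poly2_eval 2 aa z)).
  assert (HE0 : E 0).
  { exists (fun _ => (0,0)). split.
    - intros i _. unfold Cmod; simpl. rewrite Rmult_0_l, Rplus_0_r, sqrt_0. lra.
    - unfold poly2_eval, Cmod. simpl. unfold Cadd, Cmul, C0. simpl.
      symmetry. replace (_ + _) with 0 by ring. apply sqrt_0. }
  destruct (completeness E) as [s Hs].
  { exists S. intros r [z [Hz ->]]. apply Hub; exact Hz. }
  { exists 0; exact HE0. }
  assert (Hs0 : 0 <= s) by (apply (proj1 Hs); exact HE0).
  assert (HsS : s <= S).
  { apply (proj2 Hs). intros r [z [Hz ->]]. apply Hub; exact Hz. }
  pose proof (HD 2%nat aa s Hs) as Hc.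
  set (X := Rpower cc (4/3)).
  set (Y := Rpower (2 + X) (3/4)).
  assert (HXpos : 0 < X) by (unfold X, Rpower; apply exp_pos).
  assert (HYpos : 0 < Y) by (unfold Y, Rpower; apply exp_pos).
  assert (Hcoef : coef_norm2 2 aa = Y).
  { unfold coef_norm2. simpl. replace (-1) with (-(1)) by ring. rewrite Cmod_real, Cmod_real, Cmod_real' by lra.
    rewrite (powr_pos 1), (powr_pos cc) by lra. rewrite Rpower_one.
    fold X. rewrite powr_pos by lra. unfold Y. f_equal. ring. }
  assert (Hf2 : f2 1 (-1) (352203 / 125000) = Y / S).
  { unfold f2. fold cc. replace (-1) with (-(1)) by ring. rewrite Rabs_R1, Rabs_Ropp, Rabs_R1, Rabs_pos_eq by lra.
    replace (1 * - (1)) with (-(1)) by ring. rewrite Rabs_Ropp, Rabs_R1.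
    rewrite (powr_pos 1), (powr_pos cc) by lra. rewrite Rpower_one. fold X.
    rewrite powr_pos by lra. unfold Y, S.
    replace (2 + X) with (1 + 1 + X) by ring. f_equal. replace (4*1) with 4 by ring. ring. }
  rewrite Hcoef in Hc.
  assert (HDpos : 0 <= D).
  { destruct (Rle_dec 0 D); auto. exfalso. nra. }
  assert (HYS : Y <= D * S).
  { eapply Rle_trans; [exact Hc|]. apply Rmult_le_compat_l; lra. }
  assert (HYSD : Y / S <= D).
  { apply (Rmult_le_reg_r S); [lra|]. replace (Y / S * S) with Y by (field; lra). lra. }
  rewrite Hf2. split; [exact HYSD|].
  assert (HX3 : X ^ 3 = cc ^ 4).
  { unfold X. rewrite <- Rpower_pow by (unfold Rpower; apply exp_pos).
    rewrite Rpower_mult. rewrite <- Rpower_pow by lra. f_equal. simpl. field. }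
  assert (HY4 : Y ^ 4 = (2 + X) ^ 3).
  { unfold Y. rewrite <- Rpower_pow by (unfold Rpower; apply exp_pos).
    rewrite Rpower_mult. rewrite <- Rpower_pow by lra. f_equal. simpl. field. }
  assert (HXL : 39796/10000 <= X).
  { destruct (Rle_dec (39796/10000) X) as [h|h]; auto. exfalso.
    assert (X <= 39796/10000) by lra.
    assert (X ^ 3 <= (39796/10000)^3) by (apply pow_incr; lra).
    rewrite HX3 in H0. unfold cc in H0. lra. }
  assert (HY4b : (11066/10000 * S) ^ 4 < Y ^ 4).
  { rewrite HY4, Rpow_mult_distr.
    replace (S ^ 4) with ((S^2)^2) by ring. rewrite HS2.
    assert ((2 + 39796/10000)^3 <= (2+X)^3) by (apply pow_incr; lra).
    unfold cc in *. lra. }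
  assert (HkS : 11066/10000 * S <= Y).
  { destruct (Rle_dec (11066/10000 * S) Y) as [h|h]; auto. exfalso.
    assert (Y ^ 4 <= (11066/10000 * S)^4) by (apply pow_incr; lra). lra. }
  assert (11066/10000 <= Y / S).
  { apply (Rmult_le_reg_r S); [lra|]. replace (Y / S * S) with Y by (field; lra). lra. }
  lra.
Qed.
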